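(* Let $\varepsilon>0$ be fixed, let $d$ be a sufficiently large constant (depending on $\varepsilon$), and let $q\ge(2+\varepsilon)d$ and $0\le\beta<1$ be constants. Let $G=(V,E)\sim\mathcal{G}(n,d/n)$. There exists a constant $C>0$ such that with probability $1-O(1/n)$, for every $\ell\ge0$ and every path $P$ in $G$ with $\ell$ edges, $|B(P)|\le C(\ell+\log n)$.
   Context: $\mathcal{G}(n,p)$ is the Erdős–Rényi random graph on $n$ vertices with each edge present independently with probability $p$. A vertex $u$ of $G$ is low-degree if $\deg_G(u)<\frac{q-1}{1-\beta}-2$, high-degree otherwise. For $B\subseteq V$, $\partial B=\{u\in V\setminus B:\exists w\in B,uw\in E\}$. A set $B\subseteq V$ is a permissive block if every vertex of $\partial B$ is low-degree; $B(P)$ denotes the minimal permissive block containing the vertex set of $P$. *)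

(* Defs.v *)
From Stdlib Require Import Reals ClassicalEpsilon.
From HB Require Import structures.
From mathcomp Require Import all_boot.
Local Open Scope R_scope.

Set Implicit Arguments.
Unset Strict Implicit.
Unset Printing Implicit Defensive.

(* Vertex set V = 'I_n. A graph is encoded by its edge set E, a set of pairs
   (i,j) with i < j (each unordered edge stored once). *)
Definition upairs (n : nat) : {set 'I_n * 'I_n} := [set e : 'I_n * 'I_n | (nat_of_ord e.1 < nat_of_ord e.2)%N].

Definition adj (n : nat) (E : {set 'I_n * 'I_n}) : rel 'I_n :=
  fun u w => ((u, w) \in E) || ((w, u) \in E).

Definition deg (n : nat) (E : {set 'I_n * 'I_n}) (u : 'I_n) : nat :=
  #|[set w | adj E u w]|.

Definition low_degree (n q : nat) (beta : R) (E : {set 'I_n * 'I_n}) (u : 'I_n) : Prop :=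
  (INR (deg E u) < (INR q - 1) / (1 - beta) - 2).

Definition boundary (n : nat) (E : {set 'I_n * 'I_n}) (B : {set 'I_n}) : {set 'I_n} :=
  [set u | (u \notin B) && [exists w, (w \in B) && adj E u w]].

Definition permissive_block (n q : nat) (beta : R) (E : {set 'I_n * 'I_n})
    (B : {set 'I_n}) : Prop :=
  forall u, u \in boundary E B -> low_degree q beta E u.

Definition min_permissive_block (n q : nat) (beta : R) (E : {set 'I_n * 'I_n})
    (S B : {set 'I_n}) : Prop :=
  [/\ permissive_block q beta E B, S \subset B &
      forall B', permissive_block q beta E B' -> S \subset B' -> B' \subset B -> B' = B].

Definition gnp_weight (n : nat) (p : R) (E : {set 'I_n * 'I_n}) : R :=
  (p ^ #|E| * (1 - p) ^ (#|upairs n| - #|E|)).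

Definition gnp_prob (n : nat) (p : R) (A : {set 'I_n * 'I_n} -> Prop) : R :=
  \big[Rplus/0]_(E : {set 'I_n * 'I_n} | E \subset upairs n)
     (if excluded_middle_informative (A E) then gnp_weight p E else 0).

(* The good event: for every path P = x :: s (distinct vertices, consecutive
   ones adjacent) with l = size s edges, every minimal permissive block B(P)
   containing V(P) has |B(P)| <= C (l + log n). *)
Definition good_event (n q : nat) (beta C : R) (E : {set 'I_n * 'I_n}) : Prop :=
  forall (x : 'I_n) (s : seq 'I_n), uniq (x :: s) -> path (adj E) x s ->
  forall B : {set 'I_n},
    min_permissive_block q beta E [set y | y \in x :: s] B ->
    (INR #|B| <= C * (INR (size s) + ln (INR n))).

(* Main.v *)
Require Import Defs.
From Stdlib Require Import Reals ClassicalEpsilon.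
From HB Require Import structures.
From mathcomp Require Import all_boot.
Local Open Scope R_scope.
From Stdlib Require Import Lra.
From mathcomp Require Import Rstruct.
Set Implicit Arguments.
Unset Strict Implicit.
Unset Printing Implicit Defensive.

Lemma adjC n (E : {set 'I_n * 'I_n}) u w : adj E u w = adj E w u.
Proof. by rewrite /adj orbC. Qed.

Lemma minblock_high n q beta (E : {set 'I_n * 'I_n}) S B :
  min_permissive_block q beta E S B ->
  forall v, v \in B -> v \notin S -> ~ low_degree q beta E v.
Proof.
case=> hB hSB hmin v vB vS hlow.
have hB' : permissive_block q beta E (B :\ v).
  move=> u; rewrite inE => /andP [uB' /existsP [w /andP [wB' uw]]].
  case: (eqVneq u v) => [-> //|uv].
  apply: hB; rewrite inE; apply/andP; split.
    by move: uB'; rewrite !inE uv.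
  apply/existsP; exists w; rewrite uw andbT.
  by move: wB'; rewrite !inE => /andP [].
have := hmin _ hB'.
have hS : S \subset B :\ v.
  apply/subsetP=> y yS; rewrite !inE (subsetP hSB _ yS) andbT.
  by apply/eqP=> yv; move: vS; rewrite -yv yS.
move=> /(_ hS (subsetDl _ _)) => eqB.
by move: vB; rewrite -eqB !inE eqxx.
Qed.

Lemma minblock_cross n q beta (E : {set 'I_n * 'I_n}) S B :
  min_permissive_block q beta E S B ->
  forall A : {set 'I_n}, S \subset A -> A \subset B -> A != B ->
  exists u w, [/\ u \in A, w \in B, w \notin A & adj E u w].
Proof.
case=> hB hSB hmin A hSA hAB hne.
apply: NNPP => hno.
have hA : permissive_block q beta E A.
  move=> u; rewrite inE => /andP [uA /existsP [w /andP [wA uw]]].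
  case uB: (u \in B).
    by exfalso; apply: hno; exists w, u; split=> //; rewrite adjC.
  apply: hB; rewrite inE uB /=; apply/existsP; exists w.
  by rewrite uw (subsetP hAB _ wA).
by move/eqP: hne; apply; apply: hmin.
Qed.

Lemma path_cross n (E : {set 'I_n * 'I_n}) (A : {set 'I_n}) x s :
  path (adj E) x s -> x \in A -> forall y, y \in s -> y \notin A ->
  exists u w, [/\ u \in A, w \in x :: s, w \notin A & adj E u w].
Proof.
elim: s x => [//|z s IH] x /= /andP [xz pz] xA y.
case zA: (z \in A).
  rewrite inE => /orP [/eqP -> | ys] yA; first by rewrite zA in yA.
  have [u [w [uA ws wA uw]]] := IH z pz zA y ys yA.
  by exists u, w; split=> //; rewrite inE ws orbT.
by move=> _ _; exists x, z; split=> //; rewrite ?inE ?eqxx ?orbT ?zA.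
Qed.

Definition inEs n (E : {set 'I_n * 'I_n}) (A : {set 'I_n}) :=
  [set e in E | (e.1 \in A) && (e.2 \in A)].

Lemma grow n (E : {set 'I_n * 'I_n}) (B : {set 'I_n}) x :
  x \in B ->
  (forall A : {set 'I_n}, x \in A -> A \subset B -> A != B ->
     exists u w, [/\ u \in A, w \in B, w \notin A & adj E u w]) ->
  (#|B| - 1 <= #|inEs E B|)%N.
Proof.
move=> xB hc.
have claim : forall k, (k < #|B|)%N -> exists A : {set 'I_n},
    [/\ x \in A, A \subset B, #|A| = k.+1 & (k <= #|inEs E A|)%N].
  elim=> [_|k IH hk].
    exists [set x]; split=> //; first by rewrite set11.
      by rewrite sub1set.
    by rewrite cards1.
  have [A [xA AB cA kA]] := IH (ltnW hk).
  have hne : A != B by apply/eqP=> eAB; move: hk; rewrite -eAB cA ltnn.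
  have [u [w [uA wB wA uw]]] := hc A xA AB hne.
  exists (w |: A); split.
  - by rewrite !inE xA orbT.
  - by rewrite subUset sub1set wB AB.
  - by rewrite cardsU1 wA cA.
  have [e [eE ew eu eA]] : exists e, [/\ e \in E, (e.1 == w) || (e.2 == w),
       (e.1 \in w |: A) && (e.2 \in w |: A) & e \notin inEs E A].
    move: uw; rewrite /adj => /orP [h|h].
      exists (u, w); split=> //=; first by rewrite eqxx orbT.
        by rewrite !inE uA eqxx !orbT.
      by rewrite !inE (negbTE wA) !andbF.
    exists (w, u); split=> //=; first by rewrite eqxx.
      by rewrite !inE uA eqxx !orbT.
    by rewrite !inE (negbTE wA) !andbF.
  have sub : e |: inEs E A \subset inEs E (w |: A).
    rewrite subUset sub1set inE eE eu /=.
    apply/subsetP=> f; rewrite !inE => /andP [-> /andP [-> ->]].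
    by rewrite !orbT.
  apply: leq_trans (subset_leq_card sub).
  by rewrite cardsU1 eA add1n ltnS.
have hB0 : (0 < #|B|)%N by apply/card_gt0P; exists x.
have [A [xA AB cA kA]] : exists A : {set 'I_n}, [/\ x \in A, A \subset B, #|A| = (#|B| - 1).+1 & (#|B| - 1 <= #|inEs E A|)%N].
  by apply: claim; rewrite subn1 prednK // ltnSn.
have eAB : A = B.
  apply/eqP; rewrite eqEcard AB /= cA subn1 prednK //.
by move: kA; rewrite eAB.
Qed.
Definition orient n (v w : 'I_n) : 'I_n * 'I_n := if (v < w)%N then (v, w) else (w, v).

Lemma deg_count n (E : {set 'I_n * 'I_n}) v : E \subset upairs n ->
  deg E v = #|[set e in E | (e.1 == v) || (e.2 == v)]|.
Proof.
move=> EU.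
have inj : injective (orient v).
  move=> w w'; rewrite /orient.
  case: ltnP => h1; case: ltnP => h2; case.
  - by [].
  - by move=> a b; congruence.
  - by move=> a b; congruence.
  - by [].
rewrite /deg -(card_imset _ inj); apply: eq_card => e.
rewrite [RHS]inE; apply/imsetP/idP.
  move=> [w]; rewrite inE /adj /orient => /orP [h|h] ->.
    have := subsetP EU _ h; rewrite inE /= => ->.
    by rewrite h eqxx.
  have := subsetP EU _ h; rewrite inE /= => hw.
  by rewrite ltnNge (ltnW hw) /= h eqxx orbT.
case: e => a b /andP [ab /orP [/eqP /= av | /eqP /= bv]].
  exists b; last first.
    have := subsetP EU _ ab; rewrite inE /= => hab.
    by rewrite /orient -av hab.
  by rewrite inE /adj -av ab.
exists a; last first.
  have := subsetP EU _ ab; rewrite inE /= => hab.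
  by rewrite /orient -bv ltnNge (ltnW hab).
by rewrite inE /adj -bv ab orbT.
Qed.

Lemma sum_eq1 (T : finType) (B : {set T}) (a : T) :
  (\sum_(v in B) (a == v) = (a \in B))%N.
Proof.
case aB: (a \in B).
  rewrite (bigD1 a) //= eqxx big1 // => v /andP [_ va].
  by rewrite eq_sym (negbTE va).
rewrite big1 // => v vB; case: eqP => // av.
by move: aB; rewrite av vB.
Qed.

Lemma card_sum (T : finType) (E : {set T}) (P : pred T) :
  #|[set e in E | P e]| = (\sum_(e in E) P e)%N.
Proof.
rewrite -sum1_card big_mkcond /= [RHS]big_mkcond /=.
apply: eq_bigr => e _; rewrite !inE.
by case: (e \in E); case: (P e).
Qed.

Lemma degsum n (E : {set 'I_n * 'I_n}) (B : {set 'I_n}) : E \subset upairs n ->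
  (\sum_(v in B) deg E v = \sum_(e in E) ((e.1 \in B) + (e.2 \in B)))%N.
Proof.
move=> EU.
under eq_bigr => v _ do rewrite (deg_count v EU) card_sum.
rewrite exchange_big /=; apply: eq_bigr => e eE.
have : e.1 != e.2.
  have := subsetP EU _ eE; rewrite inE => h.
  by apply/eqP=> h'; move: h; rewrite h' ltnn.
move=> ne.
rewrite -!sum_eq1 -big_split /=; apply: eq_bigr => v _.
case: (eqVneq e.1 v) => [h1|h1]; case: (eqVneq e.2 v) => [h2|h2] //.
by move: ne; rewrite h1 h2 eqxx.
Qed.
Lemma prodsum (T : finType) (U : {set T}) (a b : T -> R) :
  \big[Rplus/0]_(E : {set T} | E \subset U)
     (\big[Rmult/1]_(e in E) a e * \big[Rmult/1]_(e in U :\: E) b e)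
  = \big[Rmult/1]_(e in U) (a e + b e).
Proof.
pose F' i := if i \in U then a i else 0.
pose G' i := if i \in U then b i else 1.
have -> : \big[Rmult/1]_(e in U) (a e + b e) = \big[Rmult/1]_i (F' i + G' i).
  rewrite big_mkcond /=; apply: eq_bigr => i _.
  by rewrite /F' /G'; case: (i \in U) => //; rewrite Rplus_0_l.
rewrite (bigA_distr 1 Rplus F' G') big_mkcond /=.
apply: eq_bigr => J _.
case: ifP => JU.
  rewrite [RHS](bigID (fun i => i \in J)) /=.
  f_equal.
    apply: eq_big => // i iJ; by rewrite iJ /F' (subsetP JU _ iJ).
  rewrite big_mkcond [RHS]big_mkcond; apply: eq_big => // i _ /=; rewrite inE; case: (i \in J) => //=.
have [i iJ iU] : exists2 i, i \in J & i \notin U.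
  by move/negbT: JU => /subsetPn.
rewrite (bigD1 i) //= iJ /F' (negbTE iU) Rmult_0_l //.
Qed.

Lemma prod_const (T : finType) (A : {pred T}) (x : R) :
  \big[Rmult/1]_(e in A) x = x ^ #|A|.
Proof.
rewrite big_const; elim: #|A| => //= k ->; done.
Qed.

Definition wt (n : nat) (p : R) (E : {set 'I_n * 'I_n}) :=
  \big[Rmult/1]_(e in E) p * \big[Rmult/1]_(e in upairs n :\: E) (1 - p).

Lemma wtE n p (E : {set 'I_n * 'I_n}) : E \subset upairs n -> gnp_weight p E = wt p E.
Proof.
move=> EU; rewrite /gnp_weight /wt !prod_const cardsD.
by rewrite (setIidPr EU).
Qed.

Lemma wt_total n p :
  \big[Rplus/0]_(E : {set 'I_n * 'I_n} | E \subset upairs n) gnp_weight p E = 1.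
Proof.
rewrite (eq_bigr (wt p)); last by move=> E; apply: wtE.
rewrite /wt prodsum (eq_bigr (fun _ => 1)); last by move=> e _; ring.
by rewrite prod_const pow1.
Qed.

Lemma pow_sum (T : finType) (A : {pred T}) (f : T -> nat) t :
  t ^ (\sum_(e in A) f e)%N = \big[Rmult/1]_(e in A) t ^ f e.
Proof.
apply: (big_morph (fun k => t ^ k)) => //.
by move=> a b; rewrite pow_add.
Qed.

Lemma prod_le (T : finType) (P : pred T) (f g : T -> R) :
  (forall i, P i -> 0 <= f i <= g i) ->
  0 <= \big[Rmult/1]_(i | P i) f i <= \big[Rmult/1]_(i | P i) g i.
Proof.
move=> h; apply: (big_ind2 (fun x y => 0 <= x <= y)) => //.
- lra.
- move=> x1 x2 y1 y2 [h1 h2] [h3 h4]; split.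
    by apply: Rmult_le_pos.
  by apply: Rmult_le_compat.
Qed.

Lemma prod_ge1 (T : finType) (P : pred T) (g : T -> R) :
  (forall i, P i -> 1 <= g i) -> 1 <= \big[Rmult/1]_(i | P i) g i.
Proof.
move=> h; apply: (big_ind (fun x => 1 <= x)) => //.
- lra.
- move=> x y hx hy; nra.
Qed.

Definition cB n (B : {set 'I_n}) (e : 'I_n * 'I_n) : nat :=
  ((e.1 \in B) + (e.2 \in B))%N.

Definition PB n (B : {set 'I_n}) :=
  [set e in upairs n | (e.1 \in B) && (e.2 \in B)].

Lemma touch_card n (B : {set 'I_n}) :
  (#|[set e in upairs n | cB B e != 0%N]| <= #|B| * n)%N.
Proof.
pose phi (e : 'I_n * 'I_n) := if e.1 \in B then e else (e.2, e.1).
have inj : {in [set e in upairs n | cB B e != 0%N] &, injective phi}.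
  move=> [a b] [a' b']; rewrite !inE /cB /phi /=.
  move=> /andP [ab _] /andP [ab' _].
  case: (a \in B); case: (a' \in B) => //.
  - by case=> h1 h2; move: ab; rewrite h1 h2 => h; move: (ltn_trans h ab'); rewrite ltnn.
  - by case=> h1 h2; move: ab'; rewrite -h1 -h2 => h; move: (ltn_trans h ab); rewrite ltnn.
  - by case=> -> ->.
rewrite -(card_in_imset inj).
have -> : (#|B| * n)%N = #|setX B [set: 'I_n]| by rewrite cardsX cardsT card_ord.
apply: subset_leq_card; apply/subsetP=> f /imsetP [[a b]].
rewrite !inE /cB /phi /= => /andP [_ h] ->.
case aB: (a \in B); rewrite /= ?aB // andbT.
by move: h; rewrite aB /=; case: (b \in B).
Qed.


Lemma mgf n p t (B : {set 'I_n}) (F : {set 'I_n * 'I_n}) :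
  0 <= p <= 1 -> 1 <= t -> F \subset PB B ->
  \big[Rplus/0]_(E : {set 'I_n * 'I_n} | E \subset upairs n)
     (gnp_weight p E * (if F \subset E then t ^ (\sum_(v in B) deg E v)%N else 0))
  <= (p * t ^ 2) ^ #|F| * (1 + p * (t ^ 2 - 1)) ^ (#|B| * n).
Proof.
move=> hp ht FB.
have FU : F \subset upairs n.
  by apply: subset_trans FB _; apply/subsetP=> e; rewrite inE => /andP [].
set X := 1 + p * (t ^ 2 - 1).
have -> : \big[Rplus/0]_(E : {set 'I_n * 'I_n} | E \subset upairs n)
     (gnp_weight p E * (if F \subset E then t ^ (\sum_(v in B) deg E v)%N else 0))
  = \big[Rplus/0]_(E : {set 'I_n * 'I_n} | E \subset upairs n)
     (\big[Rmult/1]_(e in E) (p * t ^ cB B e) *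
      \big[Rmult/1]_(e in upairs n :\: E) (if e \in F then 0 else 1 - p)).
  apply: eq_big => // E EU.
  rewrite wtE // /wt.
  case: ifP => FE.
    rewrite degsum // pow_sum big_split /=.
    have -> : \big[Rmult/1]_(e in upairs n :\: E) (if e \in F then 0 else 1 - p)
             = \big[Rmult/1]_(e in upairs n :\: E) (1 - p).
      apply: eq_big => // e; rewrite inE => /andP [eE _].
      case: ifP => // eF; by move: eE; rewrite (subsetP FE _ eF).
    rewrite /cB Rmult_assoc (Rmult_comm (\big[Rmult/1]_(e in upairs n :\: E) (1-p))) -Rmult_assoc.
    reflexivity.
  have [e eF eE] : exists2 e, e \in F & e \notin E.
    by move/negbT: FE => /subsetPn.
  rewrite [X in _ = _ * X](bigD1 e) /=; last by rewrite inE eE (subsetP FU _ eF).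
  rewrite eF; ring.
rewrite prodsum (bigID (fun e => e \in F)) /=.
have eqF : \big[Rmult/1]_(i in upairs n | i \in F)
    (p * t ^ cB B i + (if i \in F then 0 else 1 - p)) = (p * t ^ 2) ^ #|F|.
  rewrite -prod_const; apply: eq_big.
    by move=> e; rewrite andb_idl // => eF; rewrite (subsetP FU _ eF).
  move=> e /andP [_ eF]; rewrite eF.
  have := subsetP FB _ eF; rewrite inE => /andP [_ /andP [h1 h2]].
  by rewrite /cB h1 h2 /=; ring.
rewrite eqF.
apply: Rmult_le_compat_l.
  apply: pow_le; apply: Rmult_le_pos; first lra.
  apply: pow_le; lra.
have t2 : 1 <= t ^ 2 by nra.
have X1 : 1 <= X by rewrite /X; nra.
pose g (e : 'I_n * 'I_n) := if cB B e != 0%N then X else 1.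
apply: Rle_trans (_ : \big[Rmult/1]_(i in upairs n | i \notin F) g i <= _).
  apply: (proj2 (prod_le _)) => e /andP [_ eF].
  rewrite (negbTE eF) /g.
  case: eqP => [c0|cn] /=.
    by rewrite c0 /=; lra.
  have : (cB B e <= 2)%N by rewrite /cB; case: (e.1 \in B); case: (e.2 \in B).
  move/leP => c2.
  have := Rle_pow t _ _ ht c2.
  have := pow_R1_Rle t (cB B e) ht.
  rewrite /X; nra.
apply: Rle_trans (_ : \big[Rmult/1]_(i in upairs n) g i <= _).
  rewrite [X in _ <= X](bigID (fun e => e \in F)) /=.
  have h1 : 1 <= \big[Rmult/1]_(i in upairs n | i \in F) g i.
    by apply: prod_ge1 => e _; rewrite /g; case: ifP => _; lra.
  have h0 : 0 <= \big[Rmult/1]_(i in upairs n | i \notin F) g i.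
    by case: (prod_le (P := fun i => (i \in upairs n) && (i \notin F)) (f := g) (g := g)) => // e _; rewrite /g; case: ifP => _; lra.
  by have := Rmult_le_compat_r _ _ _ h0 h1; rewrite Rmult_1_l.
have -> : \big[Rmult/1]_(i in upairs n) g i
        = \big[Rmult/1]_(i in [set e in upairs n | cB B e != 0%N]) X.
  rewrite big_mkcond [RHS]big_mkcond; apply: eq_big => // e _.
  by rewrite inE /g; case: (e \in upairs n); case: (cB B e != 0%N).
rewrite prod_const; apply: Rle_pow => //; apply/leP; exact: touch_card.
Qed.


Definition thr (q : nat) (beta : R) := (INR q - 1) / (1 - beta) - 2.
Definition hi n q beta (E : {set 'I_n * 'I_n}) (v : 'I_n) :=
  Rleb (thr q beta) (INR (deg E v)).

Lemma bad_witness n q beta C (E : {set 'I_n * 'I_n}) :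
  E \subset upairs n -> ~ good_event q beta C E ->
  exists (B : {set 'I_n}) (F : {set 'I_n * 'I_n}) (l : nat),
    [/\ F \subset PB B, #|F| = (#|B| - 1)%N, F \subset E,
        C * (INR l + ln (INR n)) < INR #|B| &
        (#|B| <= l.+1 + #|[set v in B | hi q beta E v]|)%N].
Proof.
move=> EU hng.
have [x [s [_ [hp [B [hmb hlt]]]]]] : exists x s, uniq (x :: s) /\ path (adj E) x s /\
   exists B, min_permissive_block q beta E [set y | y \in x :: s] B /\
   ~ (INR #|B| <= C * (INR (size s) + ln (INR n))).
  apply: NNPP => hc; apply: hng => x s hu hp B hB.
  apply: NNPP => hb; apply: hc; exists x, s; split=> //; split=> //.
  by exists B.
set S := [set y | y \in x :: s] in hmb.
have SB : S \subset B by case: hmb.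
have xB : x \in B by apply: (subsetP SB); rewrite inE inE eqxx.
have hcross : forall A : {set 'I_n}, x \in A -> A \subset B -> A != B ->
     exists u w, [/\ u \in A, w \in B, w \notin A & adj E u w].
  move=> A xA AB ne.
  case SA: (S \subset A); first exact: minblock_cross hmb A SA AB ne.
  have [y yS yA] : exists2 y, y \in S & y \notin A by move/negbT: SA => /subsetPn.
  have ys : y \in s.
    move: yS; rewrite inE inE => /orP [/eqP yx|//].
    by move: yA; rewrite yx xA.
  have [u [w [uA ws wA uw]]] := path_cross hp xA ys yA.
  exists u, w; split=> //; apply: (subsetP SB); by rewrite inE.
have hg := grow xB hcross.
have [F] : exists F : {set 'I_n * 'I_n}, F \in [set F' : {set 'I_n * 'I_n} | F' \subset inEs E B & #|F'| == (#|B| - 1)%N].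
  by apply/card_gt0P; rewrite cards_draws bin_gt0.
rewrite inE => /andP [FI /eqP cF].
exists B, F, (size s); split=> //.
- apply: subset_trans FI _; apply/subsetP=> e; rewrite !inE => /andP [eE ->].
  by have := subsetP EU _ eE; rewrite inE andbT.
- by apply: subset_trans FI _; apply/subsetP=> e; rewrite inE => /andP [].
- by apply: Rnot_le_lt.
have sub : B \subset S :|: [set v in B | hi q beta E v].
  apply/subsetP=> v vB; rewrite inE.
  case vS: (v \in S) => //=.
  rewrite inE vB /=; apply/RlebP; apply: Rnot_lt_le.
  by apply: (minblock_high hmb vB); rewrite vS.
apply: leq_trans (subset_leq_card sub) _.
apply: leq_trans (leq_card_setU _ _) _.
rewrite leq_add2r.
have -> : #|S| = #|x :: s| by apply: eq_card => y; rewrite inE.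
exact: card_size.
Qed.


Lemma sum_le (T : finType) (P : pred T) (f g : T -> R) :
  (forall i, P i -> f i <= g i) ->
  \big[Rplus/0]_(i | P i) f i <= \big[Rplus/0]_(i | P i) g i.
Proof.
move=> h; apply: (big_ind2 (fun x y => x <= y)) => //; first lra.
by move=> *; lra.
Qed.

Lemma sum_ge0 (T : finType) (P : pred T) (f : T -> R) :
  (forall i, P i -> 0 <= f i) -> 0 <= \big[Rplus/0]_(i | P i) f i.
Proof.
move=> h; apply: (big_ind (fun x => 0 <= x)) => //; first lra.
by move=> *; lra.
Qed.

Lemma sum_ge_term (T : finType) (P : pred T) (f : T -> R) i :
  P i -> (forall j, P j -> 0 <= f j) -> f i <= \big[Rplus/0]_(j | P j) f j.
Proof.
move=> Pi h; rewrite (bigD1 i) //=.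
have : 0 <= \big[Rplus/0]_(j | P j && (j != i)) f j.
  by apply: sum_ge0 => j /andP [Pj _]; apply: h.
move=> h0; have := h0; move: h0 => _; lra.
Qed.

Lemma sum_const (T : finType) (A : {pred T}) (x : R) :
  \big[Rplus/0]_(e in A) x = INR #|A| * x.
Proof.
rewrite big_const; elim: #|A| => [|k IH]; first by rewrite /=; lra.
by rewrite [iter _ _ _]/= IH S_INR; ring.
Qed.

Lemma sum_sub (T : finType) (P : pred T) (f g : T -> R) :
  \big[Rplus/0]_(i | P i) (f i - g i) =
  \big[Rplus/0]_(i | P i) f i - \big[Rplus/0]_(i | P i) g i.
Proof.
have : \big[Rplus/0]_(i | P i) (f i - g i) + \big[Rplus/0]_(i | P i) g i
       = \big[Rplus/0]_(i | P i) f i.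
  rewrite -big_split /=; apply: eq_big => // i _; ring.
lra.
Qed.

Lemma assembly n q beta C p t z :
  0 <= p <= 1 -> 1 <= t -> 0 < z -> 0 <= C ->
  (forall (E : {set 'I_n * 'I_n}) (B : {set 'I_n}) (l : nat),
     E \subset upairs n ->
     C * (INR l + ln (INR n)) < INR #|B| ->
     (#|B| <= l.+1 + #|[set v in B | hi q beta E v]|)%N ->
     z ^ #|B| <= t ^ (\sum_(v in B) deg E v)%N) ->
  1 - \big[Rplus/0]_(B : {set 'I_n} | Rltb (C * ln (INR n)) (INR #|B|))
       (INR 'C(#|PB B|, #|B| - 1) *
        ((p * t ^ 2) ^ (#|B| - 1) * (1 + p * (t ^ 2 - 1)) ^ (#|B| * n)) / z ^ #|B|)
  <= gnp_prob p (@good_event n q beta C).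
Proof.
move=> hp ht hz hC hthr.
pose Phi (E : {set 'I_n * 'I_n}) :=
  \big[Rplus/0]_(B : {set 'I_n} | Rltb (C * ln (INR n)) (INR #|B|))
   \big[Rplus/0]_(F : {set 'I_n * 'I_n} | (F \subset PB B) && (#|F| == #|B| - 1)%N)
     ((if F \subset E then t ^ (\sum_(v in B) deg E v)%N else 0) / z ^ #|B|).
have hzm : forall m, 0 < z ^ m by move=> m; apply: pow_lt.
have Phi0 : forall E, 0 <= Phi E.
  move=> E; apply: sum_ge0 => B _; apply: sum_ge0 => F _.
  apply: Rmult_le_pos; last by apply: Rlt_le; apply: Rinv_0_lt_compat.
  case: ifP => _; last lra.
  apply: pow_le; lra.
have w0 : forall E : {set 'I_n * 'I_n}, 0 <= gnp_weight p E.
  move=> E; rewrite /gnp_weight; apply: Rmult_le_pos; apply: pow_le; lra.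
have pt : forall E : {set 'I_n * 'I_n}, E \subset upairs n ->
    gnp_weight p E - gnp_weight p E * Phi E <=
    (if excluded_middle_informative (good_event q beta C E) then gnp_weight p E else 0).
  move=> E EU.
  case: excluded_middle_informative => hg.
    rewrite /=; have := w0 E; have := Phi0 E; nra.
  rewrite /=.
  have [B [F [l [FB cF FE hlt hcard]]]] := bad_witness EU hg.
  have P1 : 1 <= Phi E.
    have hB : Rltb (C * ln (INR n)) (INR #|B|).
      apply/RltbP.
      apply: Rle_lt_trans hlt.
      have := pos_INR l; nra.
    rewrite /Phi.
    eapply Rle_trans; last first.
      apply: (@sum_ge_term _ (fun B0 : {set 'I_n} => Rltb (C * ln (INR n)) (INR #|B0|)) _ B hB).
      move=> B' _; apply: sum_ge0 => F' _.
      apply: Rmult_le_pos; last by apply: Rlt_le; apply: Rinv_0_lt_compat.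
      case: ifP => _; last lra.
      apply: pow_le; lra.
    have hF : (F \subset PB B) && (#|F| == #|B| - 1)%N by rewrite FB cF eqxx.
    eapply Rle_trans; last first.
      apply: (@sum_ge_term _ (fun F0 : {set 'I_n * 'I_n} => (F0 \subset PB B) && (#|F0| == (#|B| - 1)%N)) _ F hF).
      move=> F' _.
      apply: Rmult_le_pos; last by apply: Rlt_le; apply: Rinv_0_lt_compat.
      case: ifP => _; last lra.
      apply: pow_le; lra.
    rewrite FE.
    have := hthr E B l EU hlt hcard.
    move: (hzm #|B|) => hzB h.
    apply: (Rmult_le_reg_r (z ^ #|B|)) => //.
    rewrite Rmult_assoc Rinv_l; lra.
  have := w0 E; nra.
have step1 := sum_le (P := fun E : {set 'I_n * 'I_n} => E \subset upairs n) pt.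
rewrite sum_sub wt_total in step1.
suff : \big[Rplus/0]_(E : {set 'I_n * 'I_n} | E \subset upairs n) (gnp_weight p E * Phi E)
  <= \big[Rplus/0]_(B : {set 'I_n} | Rltb (C * ln (INR n)) (INR #|B|))
       (INR 'C(#|PB B|, #|B| - 1) *
        ((p * t ^ 2) ^ (#|B| - 1) * (1 + p * (t ^ 2 - 1)) ^ (#|B| * n)) / z ^ #|B|).
  by move=> h; apply: (Rle_trans _ _ _ _ step1); apply: Rplus_le_compat_l; apply: Ropp_le_contravar; exact: h.
have eq1 : \big[Rplus/0]_(E : {set 'I_n * 'I_n} | E \subset upairs n) (gnp_weight p E * Phi E)
  = \big[Rplus/0]_(B : {set 'I_n} | Rltb (C * ln (INR n)) (INR #|B|))
     \big[Rplus/0]_(F : {set 'I_n * 'I_n} | (F \subset PB B) && (#|F| == #|B| - 1)%N)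
      (\big[Rplus/0]_(E : {set 'I_n * 'I_n} | E \subset upairs n)
        (gnp_weight p E * (if F \subset E then t ^ (\sum_(v in B) deg E v)%N else 0)) / z ^ #|B|).
  rewrite /Phi.
  under eq_bigr => E _ do (rewrite big_distrr; under eq_bigr => B _ do rewrite big_distrr).
  rewrite exchange_big; apply: eq_bigr => B _.
  rewrite exchange_big; apply: eq_bigr => F _.
  rewrite /Rdiv big_distrl; apply: eq_bigr => E _ /=; ring.
rewrite eq1; apply: sum_le => B _.
apply: Rle_trans (_ : \big[Rplus/0]_(F : {set 'I_n * 'I_n} | (F \subset PB B) && (#|F| == #|B| - 1)%N)
   (((p * t ^ 2) ^ (#|B| - 1) * (1 + p * (t ^ 2 - 1)) ^ (#|B| * n)) / z ^ #|B|) <= _).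
  apply: sum_le => F /andP [FB /eqP cF].
  apply: Rmult_le_compat_r; first by apply: Rlt_le; apply: Rinv_0_lt_compat.
  by rewrite -cF; apply: mgf.
rewrite (eq_bigl (fun F => F \in [set F' : {set 'I_n * 'I_n} | (F' \subset PB B) & (#|F'| == #|B| - 1)%N])); last first.
  by move=> F; rewrite inE.
rewrite sum_const cards_draws /Rdiv !Rmult_assoc; lra.
Qed.


Lemma ffact_le N k : (N ^_ k <= N ^ k)%N.
Proof.
elim: k N => [|k IH] N; first by rewrite ffactn0 expn0.
rewrite ffactnS expnS leq_mul2l; case: N => [//|N] /=.
apply: leq_trans (IH N) _; case: k {IH} => [//|k]; by rewrite leq_exp2r.
Qed.

Lemma INR_leq a b : (a <= b)%N -> INR a <= INR b.
Proof. by move/leP; apply: le_INR. Qed.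

Lemma INR_mul a b : INR (a * b)%N = INR a * INR b.
Proof. exact: mult_INR. Qed.

Lemma INR_exp a b : INR (a ^ b)%N = INR a ^ b.
Proof.
elim: b => [|b IH]; first by rewrite expn0.
by rewrite expnS INR_mul IH /=.
Qed.

Lemma binom_bound N k : INR 'C(N, k) * INR k`! <= INR N ^ k.
Proof.
rewrite -INR_mul bin_ffact -INR_exp; apply: INR_leq; exact: ffact_le.
Qed.

Lemma exp_pow x k : exp x ^ k = exp (INR k * x).
Proof.
elim: k => [|k IH]; first by rewrite /= Rmult_0_l exp_0.
rewrite -[exp x ^ k.+1]/(exp x * exp x ^ k) IH -exp_plus S_INR; congr exp; ring.
Qed.

Lemma step_e m : INR m.+1 ^ m <= exp 1 * INR m ^ m.
Proof.
case: m => [|m]; first by rewrite /=; have := exp_ineq1_le 1; lra.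
set M := INR m.+1.
have hM : 0 < M by apply: lt_0_INR; apply/ltP.
have -> : INR m.+2 = M * (1 + / M) by rewrite S_INR -/M; field; lra.
rewrite Rpow_mult_distr Rmult_comm.
apply: Rmult_le_compat_r; first by apply: pow_le; lra.
apply: Rle_trans (_ : exp (/ M) ^ m.+1 <= _).
  apply: pow_incr; split; first by have := Rinv_0_lt_compat _ hM; lra.
  have := exp_ineq1_le (/ M); lra.
rewrite exp_pow -/M; right; congr exp; field; lra.
Qed.

Lemma fact_e m : INR m ^ m <= exp (INR m) * INR m`!.
Proof.
elim: m => [|m IH]; first by rewrite /= exp_0; lra.
rewrite factS INR_mul /= -/(INR m.+1).
have h1 := step_e m.
have h0 : 0 <= INR m.+1 by apply: pos_INR.
have hm : 0 <= INR m ^ m by apply: pow_le; apply: pos_INR.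
have -> : exp (INR m.+1) = exp 1 * exp (INR m).
  by rewrite -exp_plus S_INR; congr exp; ring.
have he : 0 <= exp 1 by have := exp_pos 1; lra.
have : INR m.+1 ^ m <= exp 1 * (exp (INR m) * INR m`!).
  apply: Rle_trans h1 _; apply: Rmult_le_compat_l => //.
nra.
Qed.

Lemma fact_pos m : 0 < INR m`!.
Proof. apply: lt_0_INR; apply/ltP; exact: fact_gt0. Qed.

Lemma mk_bound k : INR k.+1 ^ k <= exp (INR k.+1) * INR k`!.
Proof.
have h := fact_e k.+1.
rewrite factS INR_mul in h.
rewrite -[INR k.+1 ^ k.+1]/(INR k.+1 * INR k.+1 ^ k) in h.
have hm : 0 < INR k.+1 by apply: lt_0_INR; apply/ltP.
apply: (Rmult_le_reg_l (INR k.+1)) => //; lra.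
Qed.

Lemma fact_mono k : INR k`! <= INR k.+1`!.
Proof.
rewrite factS INR_mul; have := fact_pos k; have := pos_INR k.
rewrite S_INR; nra.
Qed.

Lemma ab_bound n k :
  INR 'C(n, k.+1) * INR 'C(k.+1 * k.+1, k) <= INR n ^ k.+1 * exp (INR k.+1) ^ 2.
Proof.
set a := INR 'C(n, k.+1); set b := INR 'C(k.+1 * k.+1, k).
set F1 := INR k.+1`!; set F0 := INR k`!.
set E := exp (INR k.+1); set N := INR n ^ k.+1.
set M := INR k.+1 ^ k.
have h1 : a * F1 <= N by apply: binom_bound.
have h2 : b * F0 <= M * M.
  apply: Rle_trans (binom_bound _ _) _.
  by rewrite INR_mul Rpow_mult_distr; right.
have hM : M <= E * F0 by apply: mk_bound.
have hM' : M <= E * F1.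
  apply: Rle_trans hM _; apply: Rmult_le_compat_l; first by apply: Rlt_le; apply: exp_pos.
  by apply: fact_mono.
have a0 : 0 <= a by apply: pos_INR.
have b0 : 0 <= b by apply: pos_INR.
have F0p : 0 < F0 by apply: fact_pos.
have F1p : 0 < F1 by apply: fact_pos.
have M0 : 0 <= M by apply: pow_le; apply: pos_INR.
have E0 : 0 < E by apply: exp_pos.
have N0 : 0 <= N by apply: pow_le; apply: pos_INR.
have hMM : M * M <= (E * F0) * (E * F1) by apply: Rmult_le_compat.
have : a * b * (F0 * F1) <= N * E ^ 2 * (F0 * F1).
  have e1 : a * b * (F0 * F1) = (a * F1) * (b * F0) by ring.
  rewrite e1; apply: Rle_trans (_ : N * (M * M) <= _).
    apply: Rmult_le_compat => //; try nra.
  have e2 : N * E ^ 2 * (F0 * F1) = N * ((E * F0) * (E * F1)) by ring.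
  rewrite e2; apply: Rmult_le_compat_l => //.
move=> h; apply: (Rmult_le_reg_r (F0 * F1)); first nra.
exact: h.
Qed.

Lemma per_m n k d t A :
  (1 <= n)%N -> 1 <= d -> 1 <= t -> 0 <= d / INR n <= 1 ->
  ln (INR n) <= INR k.+1 ->
  exp 2 * (d * t ^ 2) * exp (- ((A * ln t - (t ^ 2 - 1)) * d)) <= exp (-3) ->
  INR 'C(n, k.+1) *
   (INR 'C(k.+1 * k.+1, k.+1 - 1) *
    ((d / INR n * t ^ 2) ^ (k.+1 - 1) * (1 + d / INR n * (t ^ 2 - 1)) ^ (k.+1 * n))
    / exp (A * d * ln t) ^ k.+1)
  <= exp (-1) ^ k.+1 / INR n.
Proof.
move=> n1 d1 t1 hp hln hr.
rewrite subn1 /=.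
set nn := INR n; set p := d / nn; set M := INR k.+1.
have nn0 : 0 < nn by apply: lt_0_INR; apply/ltP.
have pn : p * nn = d by rewrite /p; field; lra.
set X := 1 + p * (t ^ 2 - 1).
have t2 : 1 <= t ^ 2 by nra.
have X0 : 0 <= X by rewrite /X; nra.
have hX : X ^ (k.+1 * n) <= exp (M * (d * (t ^ 2 - 1))).
  apply: Rle_trans (_ : exp (p * (t ^ 2 - 1)) ^ (k.+1 * n) <= _).
    apply: pow_incr; split => //; rewrite /X; apply: exp_ineq1_le.
  rewrite exp_pow INR_mul -/nn -/M; right; congr exp; rewrite -pn; ring.
have hz : / exp (A * d * ln t) ^ k.+1 = exp (- (M * (A * d * ln t))).
  by rewrite exp_pow exp_Ropp.
set cc := A * ln t - (t ^ 2 - 1).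
have hXz : X ^ (k.+1 * n) / exp (A * d * ln t) ^ k.+1 <= exp (- (cc * d)) ^ k.+1.
  rewrite /Rdiv hz exp_pow -/M.
  apply: Rle_trans (_ : exp (M * (d * (t ^ 2 - 1))) * exp (- (M * (A * d * ln t))) <= _).
    apply: Rmult_le_compat_r; first by apply: Rlt_le; apply: exp_pos.
    exact: hX.
  rewrite -exp_plus; right; congr exp; rewrite /cc; ring.
have hab := ab_bound n k.
have hpk : (p * t ^ 2) ^ k = (d * t ^ 2) ^ k / nn ^ k.
  rewrite /p Rpow_mult_distr [(d * t ^ 2) ^ k]Rpow_mult_distr /Rdiv Rpow_mult_distr.
  rewrite pow_inv; field; apply: pow_nonzero; lra.
set a := INR 'C(n, k.+1); set b := INR 'C(k.+1 * k.+1, k).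
have a0 : 0 <= a by apply: pos_INR.
have b0 : 0 <= b by apply: pos_INR.
set Q := X ^ (k.+1 * n) / exp (A * d * ln t) ^ k.+1.
have Q0 : 0 <= Q.
  rewrite /Q /Rdiv; apply: Rmult_le_pos; first by apply: pow_le.
  by apply: Rlt_le; apply: Rinv_0_lt_compat; apply: pow_lt; apply: exp_pos.
have e1 : a * (b * ((p * t ^ 2) ^ k * X ^ (k.+1 * n)) / exp (A * d * ln t) ^ k.+1)
        = (a * b) * (d * t ^ 2) ^ k / nn ^ k * Q.
  rewrite /Q hpk; field; split; [apply: pow_nonzero; have := exp_pos (A * d * ln t); lra|].
  apply: pow_nonzero; lra.
rewrite e1.
have dt1 : 1 <= d * t ^ 2 by nra.
have dk0 : 0 <= (d * t ^ 2) ^ k by apply: pow_le; lra.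
have nk : 0 < nn ^ k by apply: pow_lt.
apply: Rle_trans (_ : nn ^ k.+1 * exp M ^ 2 * (d * t ^ 2) ^ k / nn ^ k * exp (- (cc * d)) ^ k.+1 <= _).
  apply: Rmult_le_compat => //.
    apply: Rmult_le_pos; last by apply: Rlt_le; apply: Rinv_0_lt_compat.
    apply: Rmult_le_pos => //; nra.
  apply: Rmult_le_compat_r; first by apply: Rlt_le; apply: Rinv_0_lt_compat.
  by apply: Rmult_le_compat_r.
have e2 : nn ^ k.+1 * exp M ^ 2 * (d * t ^ 2) ^ k / nn ^ k * exp (- (cc * d)) ^ k.+1
        = nn * ((exp 2 * exp (- (cc * d))) ^ k.+1 * (d * t ^ 2) ^ k).
  rewrite -[nn ^ k.+1]/(nn * nn ^ k) Rpow_mult_distr exp_pow -/M.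
  rewrite Rpow_mult_distr [exp 2 ^ _]exp_pow -/M.
  have -> : INR 2 * M = M * 2 by rewrite /=; ring.
  field; lra.
rewrite e2.
set r := exp 2 * (d * t ^ 2) * exp (- (cc * d)).
have r0 : 0 <= r.
  rewrite /r; apply: Rmult_le_pos; last by apply: Rlt_le; apply: exp_pos.
  apply: Rmult_le_pos; [apply: Rlt_le; apply: exp_pos | lra].
have e3 : (exp 2 * exp (- (cc * d))) ^ k.+1 * (d * t ^ 2) ^ k <= r ^ k.+1.
  have -> : r ^ k.+1 = ((exp 2 * exp (- (cc * d))) ^ k.+1 * (d * t ^ 2) ^ k) * (d * t ^ 2).
    rewrite /r -[(exp 2 * (d * t ^ 2) * exp (- (cc * d))) ^ k.+1]/((exp 2 * (d * t ^ 2) * exp (- (cc * d))) * (exp 2 * (d * t ^ 2) * exp (- (cc * d))) ^ k).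
    rewrite -[(exp 2 * exp (- (cc * d))) ^ k.+1]/((exp 2 * exp (- (cc * d))) * (exp 2 * exp (- (cc * d))) ^ k).
    rewrite !Rpow_mult_distr; ring.
  have h0 : 0 <= (exp 2 * exp (- (cc * d))) ^ k.+1 * (d * t ^ 2) ^ k.
    apply: Rmult_le_pos => //; apply: pow_le; apply: Rmult_le_pos; apply: Rlt_le; apply: exp_pos.
  nra.
have e4 : r ^ k.+1 <= exp (-3) ^ k.+1 by apply: pow_incr.
have e5 : nn * exp (-3) ^ k.+1 <= exp (-1) ^ k.+1 / nn.
  rewrite !exp_pow -/M.
  have h : exp (- (2 * M)) <= / (nn * nn).
    have -> : / (nn * nn) = exp (- (2 * ln nn)).
      rewrite exp_Ropp; congr Rinv.
      have -> : 2 * ln nn = ln nn + ln nn by ring.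
      by rewrite exp_plus exp_ln.
    case: (Rle_lt_or_eq_dec _ _ hln) => hl.
      left; apply: exp_increasing; rewrite -/nn -/M in hl; lra.
    by rewrite -/nn -/M in hl; rewrite hl; right.
  have -> : M * -3 = - (2 * M) + M * -1 by ring.
  rewrite exp_plus.
  have hh : 0 < exp (M * -1) by apply: exp_pos.
  have : nn * (exp (- (2 * M)) * exp (M * -1)) <= nn * (/ (nn * nn) * exp (M * -1)).
    apply: Rmult_le_compat_l; first lra.
    by apply: Rmult_le_compat_r; lra.
  move=> h'; apply: Rle_trans h' _; right; field; lra.
have nn0' : 0 <= nn by lra.
apply: Rle_trans (_ : nn * r ^ k.+1 <= _); first by apply: Rmult_le_compat_l.
apply: Rle_trans e5; apply: Rmult_le_compat_l => //.
Qed.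


Lemma geom_sum (x : R) N : 0 <= x < 1 ->
  \big[Rplus/0]_(j < N) x ^ j <= / (1 - x).
Proof.
move=> hx.
have e : forall N, \big[Rplus/0]_(j < N) x ^ j * (1 - x) = 1 - x ^ N.
  elim=> [|M IH]; first by rewrite big_ord0 /=; ring.
  rewrite big_ord_recr /= Rmult_plus_distr_r IH; ring.
have := e N; have : 0 <= x ^ N by apply: pow_le; lra.
move=> h1 h2.
apply: (Rmult_le_reg_r (1 - x)); first lra.
rewrite h2 Rinv_l; lra.
Qed.

Lemma card_PB n (B : {set 'I_n}) : (#|PB B| <= #|B| * #|B|)%N.
Proof.
rewrite -cardsX; apply: subset_leq_card; apply/subsetP=> e.
by rewrite !inE => /andP [_ /andP [-> ->]].
Qed.

Lemma partition_card n (P : pred nat) (G : nat -> R) :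
  \big[Rplus/0]_(B : {set 'I_n} | P #|B|) G #|B| =
  \big[Rplus/0]_(j < n.+1 | P j) (INR 'C(n, j) * G j).
Proof.
rewrite (partition_big (fun B : {set 'I_n} => (inord #|B| : 'I_n.+1)) predT) //=.
rewrite [RHS]big_mkcond /=; apply: eq_bigr => j _.
have eqB : forall B : {set 'I_n}, (inord #|B| == j :> 'I_n.+1) = (#|B| == j).
  move=> B; apply/eqP/eqP => [<-|->].
    rewrite inordK // ltnS; apply: leq_trans (max_card _) _; by rewrite card_ord.
  by rewrite inord_val.
under eq_bigl => B do rewrite eqB.
case Pj: (P j).
  rewrite (eq_bigr (fun _ => G j)); last by move=> B /andP [_ /eqP ->].
  rewrite (eq_bigl (fun B => B \in [set B' : {set 'I_n} | #|B'| == j])); last first.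
    move=> B; rewrite inE; case: eqP => [->|] //=; by rewrite ?Pj ?andbF.
  by rewrite sum_const card_draws card_ord.
rewrite big_pred0 // => B; case: eqP => [->|]; by rewrite ?Pj ?andbF.
Qed.

Lemma final_sum n C d t A :
  (3 <= n)%N -> 1 <= C -> 1 <= d -> d <= INR n -> 1 <= t ->
  exp 2 * (d * t ^ 2) * exp (- ((A * ln t - (t ^ 2 - 1)) * d)) <= exp (-3) ->
  \big[Rplus/0]_(B : {set 'I_n} | Rltb (C * ln (INR n)) (INR #|B|))
    (INR 'C(#|PB B|, #|B| - 1) *
     ((d / INR n * t ^ 2) ^ (#|B| - 1) * (1 + d / INR n * (t ^ 2 - 1)) ^ (#|B| * n))
     / exp (A * d * ln t) ^ #|B|)
  <= 2 / INR n.
Proof.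
move=> n3 C1 d1 dn t1 hr.
have nn0 : 0 < INR n by apply: lt_0_INR; apply/ltP; apply: leq_trans n3.
have hp : 0 <= d / INR n <= 1.
  split; first by apply: Rmult_le_pos; [lra | apply: Rlt_le; apply: Rinv_0_lt_compat].
  apply: (Rmult_le_reg_r (INR n)) => //; rewrite /Rdiv Rmult_assoc Rinv_l; lra.
have ln1 : 1 <= ln (INR n).
  have h3 : exp 1 <= INR n.
    apply: Rle_trans exp_le_3 _.
    have := @INR_leq 3 n n3; rewrite /=; lra.
  case: (Rle_lt_or_eq_dec _ _ h3) => h.
    left; rewrite -{1}(ln_exp 1); apply: ln_increasing => //; apply: exp_pos.
  by rewrite -h ln_exp; right.
pose G (m : nat) := INR 'C(m * m, m - 1) *
     ((d / INR n * t ^ 2) ^ (m - 1) * (1 + d / INR n * (t ^ 2 - 1)) ^ (m * n))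
     / exp (A * d * ln t) ^ m.
have t2 : 1 <= t ^ 2 by nra.
have Grest0 : forall m, 0 <= ((d / INR n * t ^ 2) ^ (m - 1) *
     (1 + d / INR n * (t ^ 2 - 1)) ^ (m * n)) / exp (A * d * ln t) ^ m.
  move=> m; apply: Rmult_le_pos; last first.
    by apply: Rlt_le; apply: Rinv_0_lt_compat; apply: pow_lt; apply: exp_pos.
  apply: Rmult_le_pos; apply: pow_le; nra.
apply: Rle_trans (_ : \big[Rplus/0]_(B : {set 'I_n} | Rltb (C * ln (INR n)) (INR #|B|)) G #|B| <= _).
  apply: sum_le => B _; rewrite /G /Rdiv !Rmult_assoc.
  have inv0 : 0 < / INR n by apply: Rinv_0_lt_compat.
  apply: Rmult_le_compat_r.
    apply: Rmult_le_pos; first by apply: pow_le; nra.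
    apply: Rmult_le_pos; first by apply: pow_le; nra.
    by apply: Rlt_le; apply: Rinv_0_lt_compat; apply: pow_lt; apply: exp_pos.
  apply: INR_leq; apply: leq_bin2l; exact: card_PB.
rewrite (@partition_card n (fun m => Rltb (C * ln (INR n)) (INR m)) G).
apply: Rle_trans (_ : \big[Rplus/0]_(j < n.+1) (exp (-1) ^ j / INR n) <= _).
  rewrite big_mkcond /=; apply: sum_le => j _.
  case: ifP => hj; last first.
    apply: Rmult_le_pos; [apply: pow_le; apply: Rlt_le; apply: exp_pos|].
    by apply: Rlt_le; apply: Rinv_0_lt_compat.
  move/RltbP: hj => hj.
  case: (nat_of_ord j) hj => [|k] hk.
    by exfalso; rewrite /= in hk; nra.
  rewrite /G Rmult_assoc.
  rewrite /G; have -> : A * (d * ln t) = A * d * ln t by ring.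
  apply: per_m => //; first by apply: leq_trans n3.
  apply: Rle_trans (_ : C * ln (INR n) <= _); [nra | lra].
rewrite -big_distrl /=.
have hx : 0 <= exp (-1) < 1.
  split; first by apply: Rlt_le; apply: exp_pos.
  rewrite -exp_0; apply: exp_increasing; lra.
have hg := geom_sum (n.+1) hx.
have he : / (1 - exp (-1)) <= 2.
  have : exp (-1) <= / 2.
    have -> : exp (-1) = / exp 1 by rewrite -exp_Ropp.
    apply: Rinv_le_contravar; first lra. have := exp_ineq1_le 1; lra.
  move=> h; apply: (Rmult_le_reg_r (1 - exp (-1))); first lra.
  rewrite Rinv_l; lra.
rewrite /Rdiv; apply: Rmult_le_compat_r; first by apply: Rlt_le; apply: Rinv_0_lt_compat.
exact: Rle_trans hg he.
Qed.


Lemma exp_le_inv x y : exp x <= exp y -> x <= y.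
Proof.
move=> h; case: (Rle_or_lt x y) => // hlt.
have := exp_increasing _ _ hlt; lra.
Qed.

Lemma ln_lb t : 0 < t -> 1 - / t <= ln t.
Proof.
move=> t0; set u := / t.
have u0 : 0 < u by apply: Rinv_0_lt_compat.
have : ln u <= u - 1.
  apply: exp_le_inv; rewrite exp_ln //; have := exp_ineq1_le (u - 1); lra.
rewrite /u ln_Rinv //; lra.
Qed.

Lemma thr_lb q beta d e :
  0 <= beta < 1 -> 0 < e -> 6 / e <= d -> 0 <= d -> (2 + e) * d <= INR q ->
  (2 + e / 2) * d <= thr q beta.
Proof.
move=> hb he hd d0 hq.
have hed : 3 <= e / 2 * d.
  have : e * (6 / e) <= e * d by apply: Rmult_le_compat_l; lra.
  have -> : e * (6 / e) = 6 by field; lra.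
  lra.
have q1 : 0 <= INR q - 1 by nra.
have : INR q - 1 <= (INR q - 1) / (1 - beta).
  apply: (Rmult_le_reg_r (1 - beta)); first lra.
  rewrite /Rdiv Rmult_assoc Rinv_l; last lra.
  nra.
rewrite /thr; nra.
Qed.

Lemma INR_sum (T : finType) (P : pred T) (f : T -> nat) :
  INR (\sum_(i | P i) f i)%N = \big[Rplus/0]_(i | P i) INR (f i).
Proof.
apply: (big_morph INR) => //.
by move=> a b; apply: plus_INR.
Qed.

Lemma deg_lb n q beta (E : {set 'I_n * 'I_n}) (B : {set 'I_n}) :
  0 <= thr q beta ->
  thr q beta * INR #|[set v in B | hi q beta E v]| <= INR (\sum_(v in B) deg E v)%N.
Proof.
move=> h0; rewrite INR_sum.
apply: Rle_trans (_ : \big[Rplus/0]_(v in B) (if hi q beta E v then thr q beta else 0) <= _).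
  right; rewrite -big_mkcondr /=.
  rewrite (eq_bigl (fun v => v \in [set v in B | hi q beta E v])); last by move=> v; rewrite inE.
  by rewrite sum_const Rmult_comm.
apply: sum_le => v _; rewrite /hi; case: RlebP => // _; exact: pos_INR.
Qed.

Lemma exp_mono x y : x <= y -> exp x <= exp y.
Proof.
move=> h; case: (Rle_lt_or_eq_dec _ _ h) => h'.
  by left; apply: exp_increasing.
by rewrite h'; right.
Qed.

Lemma ln_ge1 n : (3 <= n)%N -> 1 <= ln (INR n).
Proof.
move=> n3.
have h3 : exp 1 <= INR n.
  apply: Rle_trans exp_le_3 _.
  have := @INR_leq 3 n n3; rewrite /=; lra.
case: (Rle_lt_or_eq_dec _ _ h3) => h.
  left; rewrite -{1}(ln_exp 1); apply: ln_increasing => //; apply: exp_pos.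
by rewrite -h ln_exp; right.
Qed.

Theorem mainTheorem15 :
  forall eps : R, (0 < eps) ->
  exists d0 : R, forall (d : R) (q : nat) (beta : R),
    (d0 <= d) -> ((2 + eps) * d <= INR q) -> (0 <= beta < 1) ->
    exists C : R, (0 < C) /\
    exists (K : R) (N0 : nat), forall n : nat, (N0 <= n)%N ->
      (1 - K / INR n <= gnp_prob (d / INR n) (@good_event n q beta C)).
Proof.
move=> eps heps.
pose e := Rmin eps 1.
have e0 : 0 < e by apply: Rmin_pos; lra.
have e1 : e <= 1 by apply: Rmin_r.
have ee : e <= eps by apply: Rmin_l.
pose A := 2 + e / 4; pose t := 1 + e / 16.
pose cc := A * ln t - (t ^ 2 - 1).
have t1 : 1 <= t by rewrite /t; lra.
have t0 : 0 < t by lra.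
have Lt := ln_lb t0.
have hLt : t - 1 <= ln t * t.
  have : (1 - / t) * t <= ln t * t by apply: Rmult_le_compat_r; lra.
  have -> : (1 - / t) * t = t - 1 by field; lra.
  done.
have ln0 : 0 <= ln t.
  have : 0 <= 1 - / t.
    have : / t <= 1 by rewrite -Rinv_1; apply: Rinv_le_contravar; lra.
    lra.
  lra.
have cc0 : 0 < cc.
  have hA : A * (t - 1) <= A * (ln t * t) by apply: Rmult_le_compat_l => //; rewrite /A; lra.
  have h1 : cc * t >= (t - 1) * (A - t * (t + 1)) by rewrite /cc; nra.
  have h2 : 0 < (t - 1) * (A - t * (t + 1)).
    apply: Rmult_lt_0_compat; rewrite /t /A; nra.
  nra.
exists (Rmax (Rmax (6 / e) 1) (8 * exp 5 / (cc * cc))).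
move=> d q beta hd hq hb.
have d6 : 6 / e <= d.
  apply: Rle_trans hd; apply: Rle_trans (Rmax_l _ _); apply: Rmax_l.
have d1 : 1 <= d.
  apply: Rle_trans hd; apply: Rle_trans (Rmax_l _ _); apply: Rmax_r.
have dc : 8 * exp 5 / (cc * cc) <= d.
  apply: Rle_trans hd; apply: Rmax_r.
pose C := 1 + 16 / e.
have Ce : C * e = e + 16 by rewrite /C; field; lra.
have C1 : 1 <= C.
  have : 0 <= 16 / e by apply: Rmult_le_pos; [lra | apply: Rlt_le; apply: Rinv_0_lt_compat].
  rewrite /C; lra.
exists C; split; first lra.
exists 2, (maxn 3 (Z.to_nat (up d))).
move=> n hn.
have n3 : (3 <= n)%N by apply: leq_trans hn; apply: leq_maxl.
have dn : d <= INR n.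
  have hup := archimed d.
  have h1 : (Z.to_nat (up d) <= n)%N by apply: leq_trans hn; apply: leq_maxr.
  apply: Rle_trans (INR_leq h1).
  rewrite INR_IZR_INZ Znat.Z2Nat.id; first lra.
  apply: le_IZR; lra.
have nn0 : 0 < INR n by lra.
pose p := d / INR n.
have hp : 0 <= p <= 1.
  split; first by apply: Rmult_le_pos; [lra | apply: Rlt_le; apply: Rinv_0_lt_compat].
  apply: (Rmult_le_reg_r (INR n)) => //; rewrite /p /Rdiv Rmult_assoc Rinv_l; lra.
have hq' : (2 + e) * d <= INR q by apply: Rle_trans hq; nra.
have thrb := thr_lb hb e0 d6 (ltac:(lra)) hq'.
have thr0 : 0 <= thr q beta by nra.
have ln1 := ln_ge1 n3.
have hthr : forall (E : {set 'I_n * 'I_n}) (B : {set 'I_n}) (l : nat),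
     E \subset upairs n ->
     C * (INR l + ln (INR n)) < INR #|B| ->
     (#|B| <= l.+1 + #|[set v in B | hi q beta E v]|)%N ->
     exp (A * d * ln t) ^ #|B| <= t ^ (\sum_(v in B) deg E v)%N.
  move=> E B l EU hlt hc.
  rewrite exp_pow -(Rpower_pow _ _ t0) /Rpower.
  apply: exp_mono.
  set m := INR #|B|; set h := INR #|[set v in B | hi q beta E v]|.
  have hdeg := deg_lb E B thr0.
  rewrite -/h in hdeg; rewrite -/m in hlt.
  have hc' : m <= INR l + 1 + h.
    have := INR_leq hc; rewrite plus_INR S_INR //.
  have h0 : 0 <= h by apply: pos_INR.
  have l0 : 0 <= INR l by apply: pos_INR.
  have hl1 : C * (INR l + 1) < m.
    have : C * 1 <= C * ln (INR n) by apply: Rmult_le_compat_l; lra.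
    nra.
  have key : m * A <= (2 + e / 2) * h.
    have : C * h >= (C - 1) * m by nra.
    move=> hh.
    have hu : 16 / e * e = 16 by field; lra.
    have hk : (2 + e / 2) * (C - 1) >= A * C.
      rewrite /C /A; nra.
    have C0 : 0 < C by lra.
    apply: (Rmult_le_reg_r C) => //.
    have : (2 + e / 2) * (C * h) >= (2 + e / 2) * ((C - 1) * m).
      apply: Rle_ge; apply: Rmult_le_compat_l; lra.
    have m0 : 0 <= m by apply: pos_INR.
    have : A * C * m <= (2 + e / 2) * (C - 1) * m by apply: Rmult_le_compat_r; lra.
    nra.
  set S := INR _ in hdeg *.
  have d0 : 0 <= d by lra.
  have : m * A * d <= (2 + e / 2) * h * d by apply: Rmult_le_compat_r.
  have : (2 + e / 2) * d * h <= thr q beta * h by apply: Rmult_le_compat_r.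
  move=> h1 h2.
  have : m * A * d <= S by nra.
  move=> h3.
  have -> : m * (A * d * ln t) = (m * A * d) * ln t by ring.
  by apply: Rmult_le_compat_r.
have hr : exp 2 * (d * t ^ 2) * exp (- ((A * ln t - (t ^ 2 - 1)) * d)) <= exp (-3).
  rewrite -/cc.
  have t2 : t ^ 2 <= 2 by rewrite /t; nra.
  set x := cc * d / 2.
  have x0 : 0 <= x by rewrite /x; nra.
  have ex : x * x <= exp (cc * d).
    have -> : cc * d = x + x by rewrite /x; field.
    rewrite exp_plus; have := exp_ineq1_le x; nra.
  have hcd : 8 * exp 5 <= cc * cc * d.
    have cc2 : 0 < cc * cc by nra.
    have := Rmult_le_compat_l _ _ _ (Rlt_le _ _ cc2) dc.
    have -> : cc * cc * (8 * exp 5 / (cc * cc)) = 8 * exp 5 by field; lra.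
    lra.
  have e5 : 0 < exp 5 by apply: exp_pos.
  have hxx : exp 5 * (d * t ^ 2) <= x * x.
    have a1 : exp 5 * (d * t ^ 2) <= exp 5 * (d * 2).
      apply: Rmult_le_compat_l; first lra.
      apply: Rmult_le_compat_l; lra.
    have a2 : 8 * exp 5 * (d / 4) <= cc * cc * d * (d / 4).
      apply: Rmult_le_compat_r; lra.
    have -> : x * x = cc * cc * d * (d / 4) by rewrite /x; field.
    lra.
  have key : exp 2 * (d * t ^ 2) <= exp (-3) * exp (cc * d).
    have -> : exp 2 = exp (-3) * exp 5 by rewrite -exp_plus; congr exp; ring.
    have := exp_pos (-3); nra.
  have hE : exp (cc * d) * exp (- (cc * d)) = 1 by rewrite -exp_plus Rplus_opp_r exp_0.
  have hpos := exp_pos (- (cc * d)).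
  have := Rmult_le_compat_r _ _ _ (Rlt_le _ _ hpos) key.
  by move=> h; apply: Rle_trans h _; rewrite Rmult_assoc hE; lra.
have hz : 0 < exp (A * d * ln t) by apply: exp_pos.
have C0 : 0 <= C by lra.
have h1 := assembly hp t1 hz C0 hthr.
have h2 := final_sum (A := A) n3 C1 d1 dn t1 hr.
rewrite /p in h1.
apply: Rle_trans h1.
lra.
Qed.
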